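(* Let $S\le T_n$ be a transformation monoid and $G$ the normalizer of $S$ in $S_n$. If $a\in S$ is $\mathcal L$-related in $SG$ to an idempotent $e$ of $SG$, then $e\in S$ and $a$ is $\mathcal L$-related in $S$ to $e$.
   Context: A transformation monoid is a subsemigroup of $T_n$ containing the identity map; $G=\{g\in S_n:g^{-1}Sg=S\}$ and $SG=\{sg:s\in S,g\in G\}$, a semigroup. For a semigroup $U$, elements $a,b\in U$ are $\mathcal L$-related in $U$ if there exist $u,v\in U^1$ with $a=ub$ and $b=va$, where $U^1$ is $U$ with an identity adjoined. *)

(* Defs.v *)
From mathcomp Require Import all_boot all_fingroup.
Set Implicit Arguments. Unset Strict Implicit. Unset Printing Implicit Defensive.

Definition tr (n : nat) := {ffun 'I_n -> 'I_n}.

(* Composition with maps acting on the right (semigroup-theory convention):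
   x (f g) = (x f) g, i.e. apply f first, then g. *)
Definition tmul n (f g : tr n) : tr n := [ffun x => g (f x)].

Definition tid n : tr n := [ffun x => x].

Definition permf n (g : {perm 'I_n}) : tr n := [ffun x => g x].

Definition is_tmonoid n (S : {set tr n}) : Prop :=
  tid n \in S /\ (forall s t, s \in S -> t \in S -> tmul s t \in S).

Definition normalizer n (S : {set tr n}) : {set {perm 'I_n}} :=
  [set g : {perm 'I_n} |
     [set tmul (tmul (permf g^-1) s) (permf g) | s in S] == S].

Definition SG n (S : {set tr n}) : {set tr n} :=
  [set tmul s (permf g) | s in S, g in normalizer S].

(* a = u b for some u in U^1 (U with an identity adjoined). *)
Definition left_mult_of n (U : {set tr n}) (a b : tr n) : Prop :=
  a = b \/ exists2 u, u \in U & a = tmul u b.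

Definition Lrel n (U : {set tr n}) (a b : tr n) : Prop :=
  left_mult_of U a b /\ left_mult_of U b a.

(* Main.v *)
Require Import Defs.
From mathcomp Require Import all_boot all_fingroup.

Section Aux.
Variable n : nat.
Implicit Types (f g h : tr n).

Lemma tmulA f g h : tmul f (tmul g h) = tmul (tmul f g) h.
Proof. by apply/ffunP=> x; rewrite !ffunE. Qed.
Lemma tmul1 f : tmul f (tid n) = f.
Proof. by apply/ffunP=> x; rewrite !ffunE. Qed.
Lemma tmul1l f : tmul (tid n) f = f.
Proof. by apply/ffunP=> x; rewrite !ffunE. Qed.
Lemma permfM (p q : {perm 'I_n}) : permf (p * q) = tmul (permf p) (permf q).
Proof. by apply/ffunP=> x; rewrite !ffunE permM. Qed.
Lemma permf1 : permf 1 = tid n.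
Proof. by apply/ffunP=> x; rewrite !ffunE perm1. Qed.

Fixpoint tpow f k : tr n := if k is k'.+1 then tmul f (tpow f k') else tid n.

Lemma conjS (S : {set tr n}) (p : {perm 'I_n}) y :
  p \in normalizer S -> y \in S ->
  tmul (tmul (permf p) y) (permf p^-1) \in S.
Proof.
rewrite inE => /eqP HS yS.
have : y \in [set tmul (tmul (permf p^-1) s) (permf p) | s in S] by rewrite HS.
case/imsetP => s sS ->.
suff -> : tmul (tmul (permf p) (tmul (tmul (permf p^-1) s) (permf p))) (permf p^-1) = s by [].
by apply/ffunP=> x; rewrite !ffunE !permK.
Qed.

Lemma powlem (S : {set tr n}) (p : {perm 'I_n}) x :
  is_tmonoid S -> p \in normalizer S -> x \in S -> forall k,
  exists2 y, y \in S & tpow (tmul x (permf p)) k = tmul y (permf (p ^+ k)).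
Proof.
move=> [S1 SM] pG xS; elim=> [|k [y yS IH]].
  by exists (tid n) => //=; rewrite expg0 permf1 tmul1.
exists (tmul x (tmul (tmul (permf p) y) (permf p^-1))).
  by apply: SM => //; apply: conjS.
rewrite /= IH expgS permfM.
apply/ffunP=> z; rewrite !ffunE permKV //.
Qed.

Lemma idem_pow f k : tmul f f = f -> tpow f k.+1 = f.
Proof. by move=> H; elim: k => [|k IH] /=; [rewrite tmul1 | rewrite /= in IH; rewrite IH H]. Qed.

End Aux.

Theorem lemma4p3 (n : nat) (S : {set tr n}) (a e : tr n) :
  is_tmonoid S ->
  a \in S ->
  e \in SG S ->
  tmul e e = e ->
  Lrel (SG S) a e ->
  e \in S /\ Lrel S a e.
Proof.
move=> HS aS eSG ee [H1 H2].
have [S1 SM] := HS.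
have eS : e \in S.
  move: eSG; case/imset2P => s g sS gG Ee.
  have [y yS Hy] := @powlem n S g s HS gG sS #[g]%g.
  have := @idem_pow n e (#[g]%g).-1 ee.
  rewrite prednK ?order_gt0 // {1}Ee Hy expg_order permf1 tmul1 => <-.
  exact: yS.
have aea : tmul a e = a.
  case: H1 => [-> //| [u _ ->]]; by rewrite -tmulA ee.
split => //; split; first by right; exists a.
case: H2 => [->|[v vSG Ev]]; first by left.
right; move: vSG; case/imset2P => s g sS gG Ev'.
have [y yS Hy] := @powlem n S g _ HS gG (SM _ _ aS sS) (#[g]%g).-1.
have aha : tmul a (tmul v a) = a by rewrite -Ev.
have key : forall j, tmul (tpow n (tmul a v) j) a = a.
  elim=> [|j IH] /=; first by rewrite tmul1l.
  by rewrite -tmulA IH -tmulA aha.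
exists (tmul s (tmul (tmul (permf g) y) (permf g^-1))).
  by apply: SM => //; apply: conjS.
have -> : tmul s (tmul (tmul (permf g) y) (permf g^-1))
   = tmul v (tpow n (tmul a v) (#[g]%g).-1).
  rewrite Ev' (@tmulA n a s) Hy.
  have Hm : (g * g ^+ (#[g]).-1 = 1)%g by rewrite -expgS prednK ?order_gt0 // expg_order.
  have Hk : (g ^+ (#[g]).-1 = g^-1)%g by apply/(mulgI g); rewrite Hm mulgV.
  by rewrite Hk; apply/ffunP=> z; rewrite !ffunE.
by rewrite -tmulA key.
Qed.
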